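(* For every $n\ge1$ and $i,j\in S$, $(E^n)_{ij}$ equals the probability that the BPME started with population $n$ in environment $i$ halts in $0.j$. Moreover $f(E)=E$, and for every $S\times S$ matrix $M$ with $0\le M\le E$ entrywise, $\lim_{n\to\infty}f^n(M)=E$, where $f^n$ is the $n$-th iterate of $f$ (in particular $\lim_{n\to\infty}f^n(O)=E$ for the zero matrix $O$).
   Context: Let $S$ be a finite set and $P$ the transition matrix of an irreducible Markov chain on $S$. For each $j\in S$ let $(R_{jn})_{n\in\mathbb{N}}$ be a probability distribution on $\mathbb{N}$. Let $(\xi_t^i)_{t\ge1,i\in S}$ be independent with $\mathbb{P}(\xi_t^i=n)=R_{in}$, let $(Q_t)_{t\ge0}$ be a Markov chain with transition matrix $P$ independent of the $\xi$'s, and $\xi_t=\sum_{i}\xi_t^i\mathbf{1}\{Q_t=i\}$. The BPME is $X_{t+1}=X_t-1+\xi_{t+1}$ if $X_t>0$ and $X_{t+1}=0$ if $X_t=0$, with $X_0\ge1$. The process started from $X_0=n$, $Q_0=i$ halts in $0.j$ if $T:=\inf\{t:X_t=0\}$ is finite and $Q_T=j$. The extinction matrix $E$ is the $S\times S$ matrix with $E_{ij}$ the probability that the BPME started from $X_0=1$, $Q_0=i$ halts in $0.j$. For $n\in\mathbb{N}$ let $(P_n)_{ij}=P_{ij}R_{jn}$, and define the matrix generating function $f(M)=\sum_{n\ge0}P_nM^n$ for substochastic $S\times S$ matrices $M$, with $M^0=I$. *)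

(* Defs.v *)
From mathcomp Require Import all_boot all_order all_algebra.
From mathcomp Require Import all_classical all_reals all_analysis.
Set Implicit Arguments. Unset Strict Implicit. Unset Printing Implicit Defensive.
Import Order.TTheory GRing.Theory Num.Theory.
Import numFieldNormedType.Exports.
Local Open Scope ring_scope.

Section BPME.
Variables (R : realType) (s : nat).

Definition rseries (u : nat -> R) : R := limn (series u).

(* The environment state space S is 'I_s; P is the transition matrix of the
   environment chain, Rd j is the offspring distribution in environment j. *)
Variables (P : 'M[R]_s) (Rd : 'I_s -> nat -> R).

(* haltT t n i j = probability that the BPME started from X_0 = n, Q_0 = i
   has T = t (first hitting time of 0) and Q_T = j.  First-step decomposition:
   from X_t = n'+1 > 0, Q_{t+1} = k w.p. P i k, then xi_{t+1} = m w.p. Rd k m,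
   and X_{t+1} = n' + m. *)
Fixpoint haltT (t : nat) : nat -> 'I_s -> 'I_s -> R :=
  match t with
  | 0 => fun n i j => ((n == 0)%N && (i == j))%:R
  | t'.+1 => fun n i j =>
      match n with
      | 0 => 0
      | n'.+1 => \sum_(k < s) P i k * rseries (fun m => Rd k m * haltT t' (n' + m) k j)
      end
  end.

Definition haltProb (n : nat) (i j : 'I_s) : R := rseries (fun t => haltT t n i j).

Definition extMx : 'M[R]_s := \matrix_(i, j) haltProb 1 i j.

Definition Pn (n : nat) : 'M[R]_s := \matrix_(i, j) (P i j * Rd j n).

Definition fgen (M : 'M[R]_s) : 'M[R]_s :=
  \matrix_(i, j) rseries (fun n => (Pn n *m M ^+ n) i j).

End BPME.

(* Main.v *)
Require Import Defs.
From mathcomp Require Import all_boot all_order all_algebra.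
From mathcomp Require Import all_classical all_reals all_analysis.
Import Order.TTheory GRing.Theory Num.Theory.
Import numFieldNormedType.Exports.
Local Open Scope classical_set_scope.
Local Open Scope ring_scope.
Set Implicit Arguments. Unset Strict Implicit. Unset Printing Implicit Defensive.
Section Gen.
Variable R : realType.
Implicit Types u v : nat -> R.

Lemma eS_lim u l : (forall k, 0 <= u k) -> series u @ \oo --> l ->
  (\sum_(k <oo) (u k)%:E = l%:E)%E.
Proof.
move=> u0 ul.
have -> : (fun n => \sum_(0 <= k < n) (u k)%:E)%E = EFin \o series u.
  by apply/funext => n /=; rewrite sumEFin.
by rewrite EFin_lim ?(cvg_lim _ ul) //; apply/cvg_ex; exists l.
Qed.

Lemma rseriesE u x : (forall k, 0 <= u k) -> (\sum_(k <oo) (u k)%:E = x%:E)%E ->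
  cvgn (series u) /\ rseries u = x.
Proof.
move=> u0 ux.
have cu : cvgn (series u) by apply: nnseries_is_cvg => //; rewrite ux ltry.
split=> //.
have := @eS_lim u (rseries u) u0 cu; rewrite ux => -[] ->; done.
Qed.

Lemma rseries_cvgE u : cvgn (series u) -> series u @ \oo --> rseries u.
Proof. by move=> cu; exact: cu. Qed.

Lemma rseries_le u v : cvgn (series u) -> cvgn (series v) ->
  (forall n, u n <= v n) -> rseries u <= rseries v.
Proof. by move=> cu cv uv; apply: lim_series_le. Qed.

Lemma rseries_ge0 u : cvgn (series u) -> (forall n, 0 <= u n) -> 0 <= rseries u.
Proof.
move=> cu u0.
have c0 : cvgn (series (fun=> (0:R))).
  by rewrite (_ : series _ = fun=> 0); [apply: is_cvg_cst|apply/funext=> n; rewrite /series /= big1].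
have := @rseries_le (fun=> 0) u c0 cu u0.
by rewrite /rseries (_ : series _ = fun=> 0) ?lim_cst //; apply/funext=> n; rewrite /series /= big1.
Qed.

Lemma rseriesZ u c : cvgn (series u) ->
  cvgn (series (fun n => c * u n)) /\ rseries (fun n => c * u n) = c * rseries u.
Proof.
move=> cu; have -> : (fun n => c * u n) = c *: u by apply/funext.
by split; [exact: (@is_cvg_seriesZ _ u c cu)|exact: (lim_seriesZ c cu)].
Qed.

Lemma rseries_sum (I : Type) (r : seq I) (F : I -> nat -> R) :
  (forall i, cvgn (series (F i))) ->
  cvgn (series (fun n => \sum_(i <- r) F i n)) /\
  rseries (fun n => \sum_(i <- r) F i n) = \sum_(i <- r) rseries (F i).
Proof.
move=> cF; elim: r => [|a r [IHc IHe]].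
  have e : series (fun n => \sum_(i <- [::]) F i n) = fun=> 0.
    by apply/funext=> n; rewrite /series /= big1 // => i _; rewrite big_nil.
  rewrite /rseries e big_nil lim_cst //; split => //.
  exact: cvg_cst.
have e : (fun n => \sum_(i <- a :: r) F i n) = F a + (fun n => \sum_(i <- r) F i n).
  by apply/funext => n; rewrite big_cons.
rewrite e big_cons -IHe; split; first exact: is_cvg_seriesD.
exact: lim_seriesD.
Qed.

End Gen.
Section Gen2.
Variable R : realType.
Implicit Types u v : nat -> R.
Local Open Scope ereal_scope.

Lemma fin_le (x : \bar R) (y : R) : 0 <= x -> x <= y%:E -> x = (fine x)%:E.
Proof.
move=> x0 xy; rewrite fineK //; rewrite ge0_fin_numE //.
exact: le_lt_trans xy (ltry _).
Qed.

Lemma term_le_nneseries (g : nat -> \bar R) j : (forall k, 0 <= g k) ->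
  g j <= \sum_(k <oo) g k.
Proof.
move=> g0; apply: le_trans (@nneseries_lim_ge R g xpredT 0 j.+1 (fun k _ _ => g0 k)).
rewrite big_mkcond /= big_nat_recr //=; apply: lee_paddl; last by [].
by apply: sume_ge0 => k _; rewrite g0.
Qed.

End Gen2.
Section Gen3.
Variable R : realType.

Lemma tonelli (a : nat -> nat -> R) : (forall i j, 0 <= a i j) ->
  (forall i, cvgn (series (a i))) -> cvgn (series (fun i => rseries (a i))) ->
  (forall j, cvgn (series (fun i => a i j))) /\
  cvgn (series (fun j => rseries (fun i => a i j))) /\
  rseries (fun j => rseries (fun i => a i j)) = rseries (fun i => rseries (a i)).
Proof.
move=> a0 ca cA.
have ai0 i : 0 <= rseries (a i) by apply: rseries_ge0.
have e1 i : (\sum_(j <oo) (a i j)%:E = (rseries (a i))%:E)%E by apply: eS_lim.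
have e2 : (\sum_(i <oo) \sum_(j <oo) (a i j)%:E = (rseries (fun i => rseries (a i)))%:E)%E.
  rewrite (eq_eseriesr (fun i _ => e1 i)); exact: eS_lim.
rewrite nneseries_interchange in e2; last by move=> i j; rewrite lee_fin.
set A := rseries _ in e2.
have b0 j : (0 <= \sum_(i <oo) (a i j)%:E)%E by apply: nneseries_ge0 => i _ _; rewrite lee_fin.
have bA j : (\sum_(i <oo) (a i j)%:E <= A%:E)%E.
  by rewrite -e2; apply: (@term_le_nneseries R (fun j => \sum_(i <oo) (a i j)%:E)%E j) => k; apply: nneseries_ge0 => i _ _; rewrite lee_fin.
have bE j := fin_le (b0 j) (bA j).
have cb j := rseriesE (fun i => a0 i j) (bE j).
have cj j : cvgn (series (fun i => a i j)) by case: (cb j).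
have rj j : rseries (fun i => a i j) = fine (\sum_(i <oo) (a i j)%:E)%E by case: (cb j).
have e3 : (\sum_(j <oo) (rseries (fun i => a i j))%:E = A%:E)%E.
  by rewrite -e2; apply: eq_eseriesr => j _; rewrite rj -bE.
have := rseriesE (fun j => rseries_ge0 (cj j) (fun i => a0 i j)) e3.
by case=> c1 c2; split => //; split.
Qed.

End Gen3.
Section Gen4.
Variable R : realType.

Lemma fin_eseries (g : nat -> \bar R) t : (forall k, 0 <= g k)%E ->
  (\sum_(k <oo) (if (k <= t)%N then g k else 0) = \sum_(k < t.+1) g k)%E.
Proof.
move=> g0.
rewrite (@nneseries_split R _ 0 t.+1); last by move=> k _; case: ifP.
rewrite [X in (_ + X)%E]eseries0 ?adde0; last first.
  by move=> i; rewrite add0n => ti _; rewrite leqNgt ti.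
rewrite add0n big_mkord; apply: eq_bigr => i _; by rewrite -ltnS ltn_ord.
Qed.

Lemma cauchy_prod (x y : nat -> R) : (forall k, 0 <= x k) -> (forall k, 0 <= y k) ->
  cvgn (series x) -> cvgn (series y) ->
  cvgn (series (fun t => \sum_(t1 < t.+1) x t1 * y (t - t1)%N)) /\
  rseries (fun t => \sum_(t1 < t.+1) x t1 * y (t - t1)%N) = rseries x * rseries y.
Proof.
move=> x0 y0 cx cy.
have ex := eS_lim x0 cx; have ey := eS_lim y0 cy.
apply: rseriesE; first by move=> t; apply: sumr_ge0 => i _; rewrite mulr_ge0.
transitivity (\sum_(t <oo) \sum_(t1 <oo)
   (if (t1 <= t)%N then (x t1 * y (t - t1)%N)%:E else 0))%E.
  apply: eq_eseriesr => t _; rewrite fin_eseries; first by rewrite sumEFin.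
  by move=> k; rewrite lee_fin mulr_ge0.
rewrite nneseries_interchange; last first.
  by move=> i j; case: ifP => // _; rewrite lee_fin mulr_ge0.
transitivity (\sum_(t1 <oo) ((rseries y)%:E * (x t1)%:E))%E.
  apply: eq_eseriesr => t1 _.
  rewrite -eseries_mkcond -ereal_series -nneseries_addn; last first.
    by move=> k; rewrite lee_fin mulr_ge0.
  under eq_eseriesr do rewrite addnK EFinM.
  rewrite nneseriesZl; last by move=> k _; rewrite lee_fin.
  by rewrite ey muleC.
rewrite nneseriesZl; last by move=> k _; rewrite lee_fin.
by rewrite ex -EFinM mulrC.
Qed.

End Gen4.
Section Gen5.
Variable R : realType.

Lemma conv_id (x y : nat -> R) k :
  \sum_(t < k) \sum_(t1 < t.+1) x t1 * y (t - t1)%N =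
  \sum_(t1 < k) x t1 * \sum_(t2 < k - t1) y t2.
Proof.
elim: k => [|k IH]; first by rewrite !big_ord0.
rewrite big_ord_recr /= IH.
have -> : \sum_(t1 < k.+1) x t1 * \sum_(t2 < k.+1 - t1) y t2 =
   \sum_(t1 < k.+1) (x t1 * \sum_(t2 < k - t1) y t2) + \sum_(t1 < k.+1) x t1 * y (k - t1)%N.
  rewrite -big_split /=; apply: eq_bigr => i _.
  have hi : (i <= k)%N by rewrite -ltnS.
  by rewrite (subSn hi) big_ord_recr /= mulrDr.
by rewrite [in RHS]big_ord_recr /= subnn big_ord0 mulr0 addr0.
Qed.

Lemma conv_le (x y : nat -> R) k : (forall t, 0 <= x t) -> (forall t, 0 <= y t) ->
  \sum_(t < k) \sum_(t1 < t.+1) x t1 * y (t - t1)%N <=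
  (\sum_(t < k) x t) * (\sum_(t < k) y t).
Proof.
move=> x0 y0; rewrite conv_id mulr_suml; apply: ler_sum => i _.
apply: ler_wpM2l => //.
have e : k = ((k - i) + i)%N by rewrite subnK // ltnW.
rewrite [in X in _ <= X]e big_split_ord /= lerDl.
by apply: sumr_ge0.
Qed.

Lemma cvg_mx_entries s (u : nat -> 'M[R]_s) (L : 'M[R]_s) :
  (forall i j, (fun k => u k i j) @ \oo --> L i j) -> u @ \oo --> L.
Proof.
move=> uL; apply/cvg_mx_entourageP => A entA.
have H : forall ij : 'I_s * 'I_s, \forall k \near \oo, A (L ij.1 ij.2, u k ij.1 ij.2).
  by move=> [i j]; have /cvg_entourageP := uL i j; apply.
have HH : \forall k \near \oo, forall ij : 'I_s * 'I_s, A (L ij.1 ij.2, u k ij.1 ij.2).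
  exact: filter_forall.
move: HH; apply: filterS => k Hk i j.
by rewrite inE; exact: (Hk (i, j)).
Qed.

End Gen5.
Unset Implicit Arguments.
Section BP.
Variables (R : realType) (s : nat) (P : 'M[R]_s) (Rd : 'I_s -> nat -> R).
Hypothesis P_ge0 : forall i j, 0 <= P i j.
Hypothesis P_stoch : forall i, \sum_(j < s) P i j = 1.
Hypothesis Rd_ge0 : forall j n, 0 <= Rd j n.
Hypothesis Rd_sum1 : forall j, series (Rd j) @ \oo --> (1 : R).

Local Notation h := (haltT P Rd).

Lemma cRd k : cvgn (series (Rd k)).
Proof. by apply/cvg_ex; exists 1; exact: Rd_sum1. Qed.

Lemma rRd k : rseries (Rd k) = 1.
Proof. exact: cvg_lim (Rd_sum1 k). Qed.

Lemma cbound k (u : nat -> R) c : 0 <= c -> (forall m, 0 <= u m <= c * Rd k m) ->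
  cvgn (series u) /\ 0 <= rseries u <= c.
Proof.
move=> c0 uc.
have [cv ev] := rseriesZ c (cRd k).
have cu : cvgn (series u).
  apply: (series_le_cvg (v_ := fun m => c * Rd k m)) => //.
  - by move=> m; have /andP[] := uc m.
  - by move=> m; rewrite mulr_ge0.
  - by move=> m; have /andP[] := uc m.
split=> //; apply/andP; split.
  by apply: rseries_ge0 => // m; have /andP[] := uc m.
have := rseries_le cu cv (fun m => proj2 (andP (uc m))).
by rewrite ev rRd mulr1.
Qed.

Lemma h0n t i j : h t 0 i j = ((t == 0%N) && (i == j))%:R.
Proof. by case: t. Qed.

Lemma hS t n i j : h t.+1 n.+1 i j =
  \sum_(k < s) P i k * rseries (fun m => Rd k m * h t (n + m) k j).
Proof. by []. Qed.

Lemma hB t : forall n i j, 0 <= h t n i j <= 1.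
Proof.
elim: t => [|t IH] n i j.
  rewrite /=; case: ((n == 0%N) && (i == j)); by rewrite /= ?lexx ?ler01.
case: n => [|n]; first by rewrite /= lexx ler01.
rewrite hS.
have rk k : 0 <= rseries (fun m => Rd k m * h t (n + m) k j) <= 1.
  apply: (proj2 (@cbound k _ 1 ler01 _)) => m.
  have /andP[a b] := IH (n + m)%N k j.
  by rewrite mulr_ge0 //= mul1r ler_piMr.
apply/andP; split.
  by apply: sumr_ge0 => k _; rewrite mulr_ge0 //; case/andP: (rk k).
rewrite -(P_stoch i); apply: ler_sum => k _.
by apply: ler_piMr => //; case/andP: (rk k).
Qed.

Lemma cS t n k j : cvgn (series (fun m => Rd k m * h t (n + m) k j)).
Proof.
apply: (proj1 (@cbound k _ 1 ler01 _)) => m.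
have /andP[a b] := hB t (n + m)%N k j.
by rewrite mulr_ge0 //= mul1r ler_piMr.
Qed.

Lemma rseries_sum2 (I J : finType) (F : I -> J -> nat -> R) :
  (forall x y, cvgn (series (F x y))) ->
  cvgn (series (fun m => \sum_x \sum_y F x y m)) /\
  rseries (fun m => \sum_x \sum_y F x y m) = \sum_x \sum_y rseries (F x y).
Proof.
move=> cF.
have inner x := rseries_sum (index_enum J) (cF x).
have [c1 e1] := rseries_sum (index_enum I) (fun x => proj1 (inner x)).
split => //; rewrite e1; apply: eq_bigr => x _; exact: (proj2 (inner x)).
Qed.


Lemma rsZr (u : nat -> R) c : cvgn (series u) ->
  cvgn (series (fun m => u m * c)) /\ rseries (fun m => u m * c) = rseries u * c.
Proof.
move=> cu; have [c1 e1] := rseriesZ c cu.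
have -> : (fun m => u m * c) = (fun m => c * u m) by apply/funext => m; rewrite mulrC.
by rewrite e1 mulrC.
Qed.

Lemma hD t : forall a i j b, h t (a + b) i j =
  \sum_(t1 < t.+1) \sum_(l < s) h t1 a i l * h (t - t1) b l j.
Proof.
elim: t => [|t IH] a i j b.
  rewrite big_ord1 /= addn_eq0.
  case: a b => [|a] [|b] /=; last first.
  - by rewrite big1 // => l _; rewrite mul0r.
  - by rewrite big1 // => l _; rewrite mul0r.
  - by rewrite big1 // => l _; rewrite mulr0.
  rewrite (bigD1 i) //= eqxx mul1r big1 ?addr0 // => l.
  by rewrite eq_sym => /negbTE ->; rewrite mul0r.
case: a => [|a].
  rewrite add0n big_ord_recl /= [X in _ + X]big1 ?addr0; last first.
    by move=> t1 _; rewrite big1 // => l _; rewrite mul0r.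
  rewrite (bigD1 i) //= eqxx mul1r big1 ?addr0 // => l.
  by rewrite eq_sym => /negbTE ->; rewrite mul0r.
rewrite addSn hS big_ord_recl /= [X in X + _]big1 ?add0r; last first.
  by move=> l _; rewrite mul0r.
have E1 k : rseries (fun m => Rd k m * h t (a + b + m) k j) =
  \sum_(t1 < t.+1) \sum_(l < s) rseries (fun m => Rd k m * h t1 (a + m) k l) *
     h (t - t1) b l j.
  have -> : (fun m => Rd k m * h t (a + b + m) k j) =
     (fun m => \sum_(t1 < t.+1) \sum_(l < s) (Rd k m * h t1 (a + m) k l) * h (t - t1) b l j).
    apply/funext => m; rewrite -addnA (addnC b) addnA IH mulr_sumr.
    by apply: eq_bigr => t1 _; rewrite mulr_sumr; apply: eq_bigr => l _; rewrite mulrA.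
  rewrite (proj2 (rseries_sum2 _ _ _ _)); last first.
    by move=> t1 l; exact: (proj1 (rsZr _ _ (cS t1 a k l))).
  by apply: eq_bigr => t1 _; apply: eq_bigr => l _; rewrite (proj2 (rsZr _ _ (cS t1 a k l))).
under eq_bigr do rewrite E1.
symmetry; rewrite (eq_bigr (fun t1 : 'I_t.+1 => \sum_(l < s) (\sum_(k < s) P i k *
   rseries (fun m => Rd k m * h t1 (a + m) k l)) * h (t - t1) b l j)); last first.
  by move=> t1 _; rewrite /bump /= add0n subSS.
symmetry.
under [RHS]eq_bigr do (under eq_bigr do rewrite mulr_suml).
under [RHS]eq_bigr do rewrite exchange_big /=.
rewrite [RHS]exchange_big /=.
apply: eq_bigr => k _; rewrite mulr_sumr; apply: eq_bigr => t1 _.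
rewrite mulr_sumr; apply: eq_bigr => l _; by rewrite mulrA.
Qed.


Lemma hge0 t n i j : 0 <= h t n i j.
Proof. by case/andP: (hB t n i j). Qed.

Lemma term_le_sum (F : 'I_s -> R) j : (forall l, 0 <= F l) -> F j <= \sum_l F l.
Proof.
move=> F0; rewrite (bigD1 j) //= lerDl; exact: sumr_ge0.
Qed.

Lemma CB T : forall n i, \sum_(t < T) \sum_(j < s) h t n i j <= 1.
Proof.
elim: T => [|T IH] n i; first by rewrite big_ord0 ler01.
rewrite big_ord_recl (eq_bigr (fun t : 'I_T => \sum_(j < s) h t.+1 n i j)); last first.
  by move=> t _; rewrite lift0.
case: n => [|n].
  rewrite [X in _ + X]big1 ?addr0; last by move=> t _; rewrite big1.
  rewrite (bigD1 i) //= eqxx big1 ?addr0 // => l.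
  by rewrite eq_sym => /negbTE ->.
rewrite [X in X + _]big1 ?add0r //.
have E2 k : rseries (fun m => Rd k m * \sum_(t < T) \sum_(j < s) h t (n + m) k j) =
    \sum_(t < T) \sum_(j < s) rseries (fun m => Rd k m * h t (n + m) k j).
  have -> : (fun m => Rd k m * \sum_(t < T) \sum_(j < s) h t (n + m) k j) =
     (fun m => \sum_(t < T) \sum_(j < s) Rd k m * h t (n + m) k j).
    by apply/funext => m; rewrite mulr_sumr; apply: eq_bigr => t _; rewrite mulr_sumr.
  by rewrite (proj2 (rseries_sum2 _ _ _ _)) // => t j; exact: cS.
have B2 k : rseries (fun m => Rd k m * \sum_(t < T) \sum_(j < s) h t (n + m) k j) <= 1.
  have := proj2 (@cbound k (fun m => Rd k m * \sum_(t < T) \sum_(j < s) h t (n + m) k j) 1 ler01 _).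
  case/(_ _)/andP => //.
  move=> m; rewrite mulr_ge0 //=; last by apply: sumr_ge0 => t _; apply: sumr_ge0 => j _; exact: hge0.
  by rewrite mul1r ler_piMr.
under eq_bigr do (under eq_bigr do rewrite hS).
have -> : \sum_(t < T) \sum_(j < s) \sum_(k < s)
      P i k * rseries (fun m => Rd k m * h t (n + m) k j) =
    \sum_(k < s) P i k * rseries (fun m => Rd k m * \sum_(t < T) \sum_(j < s) h t (n + m) k j).
  under eq_bigr do rewrite exchange_big /=.
  rewrite exchange_big /=; apply: eq_bigr => k _.
  rewrite E2 mulr_sumr; apply: eq_bigr => t _; by rewrite mulr_sumr.
rewrite -(P_stoch i); apply: ler_sum => k _; exact: ler_piMr.
Qed.


Lemma psum_le n i j T : series (fun t => h t n i j) T <= 1.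
Proof.
rewrite /series /= big_mkord; apply: le_trans (CB T n i).
apply: ler_sum => t _; apply: (term_le_sum (fun l => h t n i l)) => l; exact: hge0.
Qed.

Lemma cHP n i j : cvgn (series (fun t => h t n i j)).
Proof.
apply: nondecreasing_is_cvgn.
  by apply: nondecreasing_series => t _ _; exact: hge0.
by exists 1 => _ [T _ <-]; exact: psum_le.
Qed.

Lemma HPB n i j : 0 <= haltProb P Rd n i j <= 1.
Proof.
apply/andP; split; first by apply: rseries_ge0 (cHP n i j) _ => t; exact: hge0.
by apply: limr_le (cHP n i j) _; apply: nearW => T; exact: psum_le.
Qed.

Lemma HP0 i j : haltProb P Rd 0 i j = (i == j)%:R.
Proof.
suff [_ HH] : cvgn (series (fun t => h t 0 i j)) /\ rseries (fun t => h t 0 i j) = (i == j)%:R by rewrite /haltProb HH.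
apply: rseriesE; first by move=> t; exact: hge0.
rewrite (eq_eseriesr (g := fun t => if (t <= 0)%N then (h t 0 i j)%:E else 0%E)); last first.
  by move=> t _; case: t.
rewrite fin_eseries; last by move=> k; rewrite lee_fin hge0.
by rewrite big_ord1.
Qed.

Lemma HPmul b i j : haltProb P Rd (1 + b) i j =
  \sum_(l < s) haltProb P Rd 1 i l * haltProb P Rd b l j.
Proof.
rewrite /haltProb.
have -> : (fun t => h t (1 + b) i j) =
   (fun t => \sum_(l < s) \sum_(t1 < t.+1) h t1 1 i l * h (t - t1) b l j).
  by apply/funext => t; rewrite hD exchange_big.
have CP l := cauchy_prod (x := fun t => h t 1 i l) (y := fun t => h t b l j)
   (fun t => hge0 t 1 i l) (fun t => hge0 t b l j) (cHP 1 i l) (cHP b l j).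
rewrite (proj2 (rseries_sum _ _)); last by move=> l; exact: (proj1 (CP l)).
by apply: eq_bigr => l _; rewrite (proj2 (CP l)).
Qed.

Lemma Epow n i j : (extMx P Rd ^+ n) i j = haltProb P Rd n i j.
Proof.
elim: n i j => [|n IH] i j; first by rewrite expr0 mxE HP0.
rewrite exprS -mulmxE mxE -add1n HPmul; apply: eq_bigr => l _.
by rewrite IH mxE.
Qed.


Lemma fgenE (M : 'M[R]_s) i j : fgen P Rd M i j =
  rseries (fun n => \sum_(k < s) P i k * (Rd k n * (M ^+ n) k j)).
Proof.
rewrite mxE; congr rseries; apply/funext => n; rewrite mxE.
by apply: eq_bigr => k _; rewrite mxE mulrA.
Qed.

Lemma shift0 (u : nat -> R) : u 0%N = 0 -> cvgn (series u) ->
  series (fun t => u t.+1) @ \oo --> rseries u.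
Proof.
move=> u0 cu.
have e : series (fun t => u t.+1) = (fun n => series u n.+1).
  by apply/funext => n; rewrite /series /= big_nat_recl // u0 add0r.
rewrite e; have := cu; rewrite -cvg_shiftS; exact.
Qed.

Lemma cHPR k j : cvgn (series (fun m => Rd k m * haltProb P Rd m k j)) /\
  0 <= rseries (fun m => Rd k m * haltProb P Rd m k j) <= 1.
Proof.
apply: (@cbound k _ 1 ler01) => m; have /andP[a b] := HPB m k j.
by rewrite mulr_ge0 //= mul1r ler_piMr.
Qed.

Lemma fE : fgen P Rd (extMx P Rd) = extMx P Rd.
Proof.
apply/matrixP => i j.
rewrite fgenE [RHS]mxE.
under eq_fun do under eq_bigr do rewrite Epow.
have T k := tonelli (a := fun m t => Rd k m * h t m k j)
  (fun m t => mulr_ge0 (Rd_ge0 k m) (hge0 t m k j))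
  (fun m => proj1 (rseriesZ (Rd k m) (cHP m k j)))
  (eq_ind _ (fun f => cvgn (series f)) (proj1 (cHPR k j)) _
     (funext (fun m => esym (proj2 (rseriesZ (Rd k m) (cHP m k j)))))).
have -> : haltProb P Rd 1 i j = rseries (fun t => h t.+1 1 i j).
  symmetry; apply: cvg_lim => //; apply: shift0 => //; exact: cHP.
have -> : (fun t => h t.+1 1 i j) =
   (fun t => \sum_(k < s) P i k * rseries (fun m => Rd k m * h t m k j)) by [].
have cr k : cvgn (series (fun t => rseries (fun m => Rd k m * h t m k j))).
  exact: (proj1 (proj2 (T k))).
have er k : rseries (fun t => rseries (fun m => Rd k m * h t m k j)) =
    rseries (fun m => Rd k m * haltProb P Rd m k j).
  rewrite (proj2 (proj2 (T k))); congr rseries; apply/funext => m.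
  exact: (proj2 (rseriesZ (Rd k m) (cHP m k j))).
have [_ ->] := rseries_sum (index_enum 'I_s)
   (F := fun k t => P i k * rseries (fun m => Rd k m * h t m k j))
   (fun k => proj1 (rseriesZ (P i k) (cr k))).
have [_ ->] := rseries_sum (index_enum 'I_s)
   (F := fun k n => P i k * (Rd k n * haltProb P Rd n k j))
   (fun k => proj1 (rseriesZ (P i k) (proj1 (cHPR k j)))).
apply: eq_bigr => k _.
rewrite (proj2 (rseriesZ (P i k) (cr k))) er.
by rewrite (proj2 (rseriesZ (P i k) (proj1 (cHPR k j)))).
Qed.


Local Notation E := (extMx P Rd).
Local Notation f := (fgen P Rd).

Lemma Ele n i j : 0 <= (E ^+ n) i j <= 1.
Proof. by rewrite Epow; exact: HPB. Qed.

Lemma MPm (A B : 'M[R]_s) : (forall i j, 0 <= A i j <= B i j) ->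
  forall n i j, 0 <= (A ^+ n) i j <= (B ^+ n) i j.
Proof.
move=> AB; elim=> [|n IH] i j.
  by rewrite !expr0 !mxE; case: (i == j); rewrite /= ?lexx ?ler01.
rewrite !exprS -!mulmxE !mxE; apply/andP; split.
  apply: sumr_ge0 => l _; apply: mulr_ge0; first by case/andP: (AB i l).
  by case/andP: (IH l j).
apply: ler_sum => l _; apply: ler_pM.
- by case/andP: (AB i l).
- by case/andP: (IH l j).
- by case/andP: (AB i l).
- by case/andP: (IH l j).
Qed.

Lemma fterm (M : 'M[R]_s) : (forall i j, 0 <= M i j <= E i j) -> forall i j n,
  0 <= \sum_(k < s) P i k * (Rd k n * (M ^+ n) k j) <= \sum_(k < s) P i k * Rd k n.
Proof.
move=> hM i j n.
have hM' : forall i j, 0 <= M i j <= E i j by [].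
apply/andP; split.
  apply: sumr_ge0 => k _; apply: mulr_ge0 => //; apply: mulr_ge0 => //.
  by case/andP: (MPm M E hM' n k j).
apply: ler_sum => k _; apply: ler_wpM2l => //; apply: ler_piMr => //.
have /andP[_ a] := MPm M E hM' n k j; have /andP[_ b] := Ele n k j.
exact: le_trans a b.
Qed.

Lemma fcvg (M : 'M[R]_s) : (forall i j, 0 <= M i j <= E i j) -> forall i j,
  cvgn (series (fun n => \sum_(k < s) P i k * (Rd k n * (M ^+ n) k j))).
Proof.
move=> hM i j.
have [cv _] := rseries_sum (index_enum 'I_s) (F := fun k n => P i k * Rd k n)
   (fun k => proj1 (rseriesZ (P i k) (cRd k))).
apply: (series_le_cvg (v_ := fun n => \sum_(k < s) P i k * Rd k n)) => //.
- by move=> n; case/andP: (fterm M hM i j n).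
- by move=> n; apply: sumr_ge0 => k _; exact: mulr_ge0.
- by move=> n; case/andP: (fterm M hM i j n).
Qed.

Lemma fmono (A B : 'M[R]_s) : (forall i j, 0 <= A i j <= B i j) ->
  (forall i j, B i j <= E i j) -> forall i j, 0 <= f A i j <= f B i j.
Proof.
move=> AB BE.
have hB' : forall i j, 0 <= B i j <= E i j.
  by move=> i j; case/andP: (AB i j) => a b; rewrite (le_trans a b) BE.
have hA : forall i j, 0 <= A i j <= E i j.
  by move=> i j; case/andP: (AB i j) => a b; rewrite a (le_trans b (BE i j)).
move=> i j; rewrite !fgenE; apply/andP; split.
  by apply: rseries_ge0 (fcvg A hA i j) _ => n; case/andP: (fterm A hA i j n).
apply: rseries_le (fcvg A hA i j) (fcvg B hB' i j) _ => n.
apply: ler_sum => k _; apply: ler_wpM2l => //; apply: ler_wpM2l => //.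
by case/andP: (MPm A B AB n k j).
Qed.

Lemma iterB (M : 'M[R]_s) : (forall i j, 0 <= M i j <= E i j) ->
  forall k i j, 0 <= iter k f M i j <= E i j.
Proof.
move=> hM; elim=> [|k IH] //= i j.
have := fmono (iter k f M) E IH (fun i j => lexx _) i j.
by rewrite fE.
Qed.

Definition Gm k : 'M[R]_s := \matrix_(i, j) \sum_(t < k) h t 1 i j.

Lemma Gle k i j : 0 <= Gm k i j <= E i j.
Proof.
rewrite !mxE; apply/andP; split; first by apply: sumr_ge0 => t _; exact: hge0.
have := nondecreasing_cvgn_le (u_ := series (fun t => h t 1 i j)) _ (cHP 1 i j) k.
rewrite /series /= big_mkord; apply.
by apply: nondecreasing_series => t _ _; exact: hge0.
Qed.

Lemma HG k : forall m i j, \sum_(t < k) h t m i j <= (Gm k ^+ m) i j.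
Proof.
elim=> [|m IH] i j.
  rewrite expr0 mxE; case: k => [|k]; first by rewrite big_ord0 ler0n.
  rewrite big_ord_recl [X in _ + X]big1 ?addr0; last by move=> t _; rewrite lift0.
  by rewrite /=; case: (i == j).
rewrite exprS -mulmxE mxE -[m.+1]add1n.
under eq_bigr do rewrite hD exchange_big /=.
rewrite exchange_big /=; apply: ler_sum => l _.
apply: le_trans (conv_le (x := fun t => h t 1 i l) (y := fun t => h t m l j) k _ _) _.
- by move=> t; exact: hge0.
- by move=> t; exact: hge0.
apply: ler_pM.
- by apply: sumr_ge0 => t _; exact: hge0.
- by apply: sumr_ge0 => t _; exact: hge0.
- by rewrite mxE.
- exact: IH.
Qed.


Lemma GPm k n i j : 0 <= (Gm k ^+ n) i j <= 1.
Proof.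
have /andP[a b] := MPm (Gm k) E (Gle k) n i j.
have /andP[_ c] := Ele n i j.
by rewrite a (le_trans b c).
Qed.

Lemma cRG k l j : cvgn (series (fun m => Rd l m * (Gm k ^+ m) l j)).
Proof.
apply: (proj1 (@cbound l _ 1 ler01 _)) => m.
have /andP[a b] := GPm k m l j.
by rewrite mulr_ge0 //= mul1r ler_piMr.
Qed.

Lemma cSH k l j : cvgn (series (fun m => Rd l m * \sum_(t < k) h t (0 + m) l j)).
Proof.
apply: (proj1 (@cbound l _ 1 ler01 _)) => m.
have a : 0 <= \sum_(t < k) h t (0 + m) l j by apply: sumr_ge0 => t _; exact: hge0.
have b : \sum_(t < k) h t (0 + m) l j <= 1.
  apply: le_trans (CB k (0 + m) l); apply: ler_sum => t _.
  by apply: (term_le_sum (fun l' => h t (0 + m) l l')) => l'; exact: hge0.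
by rewrite mulr_ge0 //= mul1r ler_piMr.
Qed.

Lemma Gstep k i j : Gm k.+1 i j <= f (Gm k) i j.
Proof.
rewrite fgenE mxE big_ord_recl /= add0r.
rewrite (eq_bigr (fun t : 'I_k => \sum_(l < s) P i l *
   rseries (fun m => Rd l m * h t (0 + m) l j))); last first.
  by [].
have [_ ->] := rseries_sum (index_enum 'I_s)
   (F := fun l n => P i l * (Rd l n * (Gm k ^+ n) l j))
   (fun l => proj1 (rseriesZ (P i l) (cRG k l j))).
rewrite exchange_big /=; apply: ler_sum => l _.
rewrite -mulr_sumr (proj2 (rseriesZ (P i l) (cRG k l j))); apply: ler_wpM2l => //.
have -> : \sum_(t < k) rseries (fun m => Rd l m * h t (0 + m) l j) =
   rseries (fun m => Rd l m * \sum_(t < k) h t (0 + m) l j).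
  have [_ <-] := rseries_sum (index_enum 'I_k)
     (F := fun t m => Rd l m * h t (0 + m) l j) (fun t => cS t 0 l j).
  by congr rseries; apply/funext => m; rewrite mulr_sumr.
apply: rseries_le (cSH k l j) (cRG k l j) _ => m.
apply: ler_wpM2l => //; rewrite add0n; exact: HG.
Qed.

Lemma Gle_iter (M : 'M[R]_s) : (forall i j, 0 <= M i j <= E i j) ->
  forall k i j, Gm k i j <= iter k f M i j.
Proof.
move=> hM; elim=> [|k IH] i j.
  by rewrite mxE big_ord0 /=; case/andP: (hM i j).
apply: le_trans (Gstep k i j) _ => /=.
have H1 : forall i' j', 0 <= Gm k i' j' <= iter k f M i' j'.
  by move=> i' j'; rewrite IH andbT; case/andP: (Gle k i' j').
have H2 : forall i' j', iter k f M i' j' <= E i' j'.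
  by move=> i' j'; case/andP: (iterB M hM k i' j').
by case/andP: (fmono _ _ H1 H2 i j).
Qed.

Lemma conv3 (M : 'M[R]_s) : (forall i j, 0 <= M i j <= E i j) ->
  (fun k => iter k f M) @ \oo --> E.
Proof.
move=> hM; apply: cvg_mx_entries => i j.
apply: (squeeze_cvgr (f := fun k => Gm k i j) (h := fun=> E i j)).
- by apply: nearW => k; rewrite Gle_iter //=; case/andP: (iterB M hM k i j).
- have -> : (fun k => Gm k i j) = series (fun t => h t 1 i j).
    by apply/funext => k; rewrite mxE /series /= big_mkord.
  rewrite mxE; exact: (cHP 1 i j).
- exact: cvg_cst.
Qed.

Lemma main_all :
  [/\ (forall (n : nat) (i j : 'I_s), (1 <= n)%N -> (E ^+ n) i j = haltProb P Rd n i j),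
      f E = E,
      (forall M : 'M[R]_s, (forall i j, 0 <= M i j <= E i j) ->
          (fun k => iter k f M) @ \oo --> E)
    & (fun k => iter k f (0 : 'M[R]_s)) @ \oo --> E].
Proof.
split.
- by move=> n i j _; exact: Epow.
- exact: fE.
- exact: conv3.
- apply: conv3 => i j; case/andP: (Gle 0 i j) => a b.
  by rewrite mxE lexx /= (le_trans a b).
Qed.

End BP.

Theorem theorem1p4 (R : realType) (s : nat) (P : 'M[R]_s) (Rd : 'I_s -> nat -> R)
  (P_ge0 : forall i j, 0 <= P i j)
  (P_stoch : forall i, \sum_(j < s) P i j = 1)
  (P_irr : forall i j, exists k : nat, 0 < (P ^+ k) i j)
  (Rd_ge0 : forall j n, 0 <= Rd j n)
  (Rd_sum1 : forall j, series (Rd j) @ \oo --> (1 : R)) :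
  let E := extMx P Rd in
  let f := fgen P Rd in
  [/\ (forall (n : nat) (i j : 'I_s), (1 <= n)%N -> (E ^+ n) i j = haltProb P Rd n i j),
      f E = E,
      (forall M : 'M[R]_s, (forall i j, 0 <= M i j <= E i j) ->
          (fun k => iter k f M) @ \oo --> E)
    & (fun k => iter k f (0 : 'M[R]_s)) @ \oo --> E].
Proof.
move=> E f; exact: (main_all R s P Rd P_ge0 P_stoch Rd_ge0 Rd_sum1).
Qed.
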